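(* There is an absolute constant $C>0$ such that for every positive integer $n$ the following holds. Suppose that $\mathcal{A}\subset\mathcal{P}[n]$ does not contain two distinct sets $A$ and $B$ with $|B\setminus A|=2|A\setminus B|$ in which $a<b$ for every $a\in A\setminus B$ and every $b\in B\setminus A$. Then \[ |\mathcal{A}|\le C\,e^{120(\log n)^{1/2}}\frac{2^n}{n^{1/2}}. \]
   Context: $[n]=\{1,\ldots,n\}$ and $\mathcal{P}[n]$ is its power set; $\log$ is the natural logarithm. *)

(* Defs.v *)
From mathcomp Require Import all_boot.
From Stdlib Require Import Reals.
Set Implicit Arguments. Unset Strict Implicit. Unset Printing Implicit Defensive.

(* Ground set [n] = {1..n} is modelled by 'I_n = {0..n-1}, order-preserving. *)

Definition forbidden_pair (n : nat) (A B : {set 'I_n}) : Prop :=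
  A != B /\
  #|B :\: A| = (2 * #|A :\: B|)%N /\
  (forall a b : 'I_n, a \in A :\: B -> b \in B :\: A -> (a < b)%N).

Definition free_family (n : nat) (F : {set {set 'I_n}}) : Prop :=
  forall A B, A \in F -> B \in F -> ~ forbidden_pair A B.

(* Main.v *)
Require Import Defs.
From mathcomp Require Import all_boot.
From Stdlib Require Import Reals.
From Stdlib Require Import Lra Psatz.
From mathcomp Require Import all_boot zify.
Set Implicit Arguments. Unset Strict Implicit. Unset Printing Implicit Defensive.

Lemma halfM M : M./2 <= M.
Proof. lia. Qed.

Lemma bin_mono M k d : k + d <= M./2 -> 'C(M, k) <= 'C(M, k + d).
Proof.
elim: d => [|d IH] H; first by rewrite addn0.
apply: leq_trans (IH _) _; first lia.
have := mul_bin_left M (k + d).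
rewrite addnS => E.
have HM : (k + d).+1 <= M - (k + d) by lia.
have : 'C(M, k + d) * (k + d).+1 <= 'C(M, (k + d).+1) * (k + d).+1.
  rewrite [X in _ <= X]mulnC E mulnC. by apply: leq_mul.
rewrite leq_mul2r. by case/orP.
Qed.

Lemma bin_max M k : 'C(M, k) <= 'C(M, M./2).
Proof.
case: (leqP k M) => kM; last by rewrite bin_small.
case: (leqP k M./2) => kh.
  have := @bin_mono M k (M./2 - k). rewrite subnKC //. by apply.
rewrite -bin_sub //.
have := @bin_mono M (M - k) (M./2 - (M - k)).
rewrite subnKC; last lia. apply; lia.
Qed.

Lemma sum_bin M : \sum_(k < M.+1) 'C(M, k) = 2 ^ M.
Proof.
have := expnDn 1 1 M. rewrite add1n => ->.
apply: eq_bigr => i _. by rewrite !exp1n !muln1.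
Qed.

Section DC.
Variables (T : finType) (upN : T -> {set T}).
Lemma dcount (S S' : {set T}) :
  \sum_(A in S) #|upN A :&: S'| = \sum_(B in S') #|[set A in S | B \in upN A]|.
Proof.
transitivity (\sum_(A in S) \sum_(B in S') (B \in upN A)).
  apply: eq_bigr => A _. rewrite -sum1_card big_mkcond /= [RHS]big_mkcond /=.
  apply: eq_bigr => B _. rewrite !inE. by case: (B \in upN A); case: (B \in S').
rewrite exchange_big /=. apply: eq_bigr => B _.
rewrite -sum1_card [RHS]big_mkcond /= [LHS]big_mkcond /=.
apply: eq_bigr => A _. rewrite !inE. by case: (B \in upN A); case: (A \in S).
Qed.
End DC.

Section LYM.
Variables (T : finType) (W : {set T}) (lev : T -> nat) (M : nat)
  (upN : T -> {set T}) (R : rel T) (G : {set T}).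
Hypothesis levM : forall A, A \in W -> lev A <= M.
Hypothesis upW : forall A B, A \in W -> B \in upN A -> B \in W /\ lev B = (lev A).+1.
Hypothesis upcard : forall A, A \in W -> #|upN A| = M - lev A.
Hypothesis dncard : forall B, B \in W -> 0 < lev B -> #|[set A in W | B \in upN A]| = lev B.
Hypothesis Rrefl : forall A, R A A.
Hypothesis Rstep : forall A B B', R A B -> B' \in upN B -> R A B' /\ A != B'.
Hypothesis GW : G \subset W.
Hypothesis Gfree : forall A B, A \in G -> B \in G -> R A B -> A != B -> False.

Let lvl k := [set A in W | lev A == k].
Let U k := [set B in lvl k | [exists A in G, R A B]].
Let Gk k := [set A in G | lev A == k].
Let nab (S : {set T}) := \bigcup_(A in S) upN A.
Let c k := k`! * (M - k)`!.

Lemma shadow k (S : {set T}) : S \subset lvl k ->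
  #|S| * (M - k) <= #|nab S| * k.+1.
Proof.
move=> sS.
have E1 : \sum_(A in S) #|upN A :&: nab S| = #|S| * (M - k).
  rewrite -sum_nat_const. apply: eq_bigr => A AS.
  have : A \in lvl k by apply: (subsetP sS).
  rewrite inE => /andP [AW /eqP <-].
  rewrite -upcard //. suff -> : upN A :&: nab S = upN A by [].
  apply/setIidPl/subsetP => B BA. by apply/bigcupP; exists A.
rewrite -E1 dcount -sum_nat_const. apply: leq_sum => B /bigcupP [A AS BA].
have : A \in lvl k by apply: (subsetP sS).
rewrite inE => /andP [AW /eqP Ak].
have [BW BL] := upW AW BA.
rewrite -Ak -BL -dncard //; last by rewrite BL.
apply: subset_leq_card. apply/subsetP => A'. rewrite !inE => /andP [A'S ->]. rewrite andbT.
have : A' \in lvl k by apply: (subsetP sS).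
by rewrite inE => /andP [-> _].
Qed.

Lemma lvl_rec k : k < M -> #|lvl k| * (M - k) = #|lvl k.+1| * k.+1.
Proof.
move=> kM.
have E1 : \sum_(A in lvl k) #|upN A :&: lvl k.+1| = #|lvl k| * (M - k).
  rewrite -sum_nat_const. apply: eq_bigr => A.
  rewrite inE => /andP [AW /eqP Ak].
  have -> : M - k = #|upN A| by rewrite upcard // Ak. suff -> : upN A :&: lvl k.+1 = upN A by [].
  apply/setIidPl/subsetP => B BA.
  have [BW BL] := upW AW BA. by rewrite inE BW BL Ak eqxx.
rewrite -E1 dcount -sum_nat_const. apply: eq_bigr => B.
rewrite inE => /andP [BW /eqP Bk].
rewrite -Bk -dncard ?Bk //. apply: eq_card => A. rewrite !inE.
apply/idP/idP; first by case/andP=> /andP [-> _] ->.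
case/andP=> AW BA. rewrite AW BA /=. have [_] := upW AW BA. rewrite Bk andbT. by case=> ->.
Qed.

Lemma main_ind j : j <= M -> \sum_(k < j.+1) #|Gk k| * c k <= #|U j| * c j.
Proof.
elim: j => [|j IH] jM.
  rewrite big_ord_recl big_ord0 addn0 leq_mul2r; apply/orP; right.
  apply: subset_leq_card. apply/subsetP => A. rewrite !inE => /andP [AG ->].
  rewrite (subsetP GW) //=. by apply/existsP; exists A; rewrite AG Rrefl.
rewrite big_ord_recr /=.
have IH' := IH (ltnW jM).
have Hsub : nab (U j) \subset U j.+1.
  apply/subsetP => B /bigcupP [A AU BA].
  move: AU; rewrite !inE => /andP [/andP [AW /eqP Aj] /existsP [A0 /andP [A0G RA]]].
  have [BW BL] := upW AW BA. rewrite BW BL Aj eqxx /=.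
  apply/existsP; exists A0; rewrite A0G /=. by have [] := Rstep RA BA.
have HG : Gk j.+1 \subset U j.+1.
  apply/subsetP => A. rewrite !inE => /andP [AG ->].
  rewrite (subsetP GW) //=. by apply/existsP; exists A; rewrite AG Rrefl.
have Hdis : [disjoint Gk j.+1 & nab (U j)].
  apply/pred0P => B /=. apply/negP => /andP [].
  rewrite inE => /andP [BG _] /bigcupP [A AU BA].
  move: AU; rewrite !inE => /andP [_ /existsP [A0 /andP [A0G RA]]].
  have [RB ne] := Rstep RA BA. exact: (Gfree A0G BG RB ne).
have Hc : #|Gk j.+1| + #|nab (U j)| <= #|U j.+1|.
  have -> : #|Gk j.+1| + #|nab (U j)| = #|Gk j.+1 :|: nab (U j)|.
    by rewrite cardsU (disjoint_setI0 Hdis) cards0 subn0.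
  apply: subset_leq_card. by rewrite subUset HG Hsub.
have Hs := @shadow j (U j).
have Hs' : #|U j| * (M - j) <= #|nab (U j)| * j.+1.
  apply: Hs. apply/subsetP => A. by rewrite inE => /andP [].
have Ecj : c j = (M - j) * (j`! * (M - j.+1)`!).
  rewrite /c. have -> : M - j = (M - j.+1).+1 by lia. rewrite factS. lia.
have Ecj1 : c j.+1 = j.+1 * (j`! * (M - j.+1)`!).
  by rewrite /c factS mulnA.
move: IH'. rewrite Ecj Ecj1. set d := (j`! * (M - j.+1)`!). move=> IH'.
have H1 := leq_mul Hs' (leqnn d).
have H2 := leq_mul Hc (leqnn (j.+1 * d)).
rewrite !mulnA in IH' H1 H2 *. rewrite mulnDl in H2. rewrite !mulnDl in H2. apply: leq_trans (leq_add IH' (leqnn _)) _. apply: leq_trans (leq_add H1 (leqnn _)) _. by rewrite addnC.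
Qed.

Lemma card_lt (H : {set T}) j : H \subset W ->
  #|[set A in H | lev A < j]| = \sum_(k < j) #|[set A in H | lev A == k]|.
Proof.
move=> HW. elim: j => [|j IH].
  rewrite big_ord0. apply/eqP; rewrite cards_eq0. apply/eqP/setP => A. by rewrite !inE andbF.
rewrite big_ord_recr /= -IH.
have -> : [set A in H | lev A < j.+1] = [set A in H | lev A < j] :|: [set A in H | lev A == j].
  apply/setP => A. rewrite !inE ltnS leq_eqVlt. by case: (A \in H); case: ltngtP.
rewrite cardsU. have -> : [set A in H | lev A < j] :&: [set A in H | lev A == j] = set0.
  apply/setP => A. rewrite !inE. case: (A \in H) => //=. by case: ltngtP.
by rewrite cards0 subn0.
Qed.

Lemma card_all (H : {set T}) : H \subset W ->
  #|H| = \sum_(k < M.+1) #|[set A in H | lev A == k]|.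
Proof.
move=> HW. rewrite -card_lt //. apply: eq_card => A. rewrite inE.
case AH: (A \in H) => //=. symmetry. rewrite ltnS. apply: levM. exact: (subsetP HW).
Qed.

Lemma c_split j : j < M -> c j = (M - j) * (j`! * (M - j.+1)`!) /\ c j.+1 = j.+1 * (j`! * (M - j.+1)`!).
Proof.
move=> jM. split.
  rewrite /c. have -> : M - j = (M - j.+1).+1 by lia. by rewrite factS mulnCA.
by rewrite /c factS mulnA.
Qed.

Lemma lvl_c k : k < M -> #|lvl k| * c k = #|lvl k.+1| * c k.+1.
Proof.
move=> kM. have [-> ->] := c_split kM. by rewrite !mulnA lvl_rec.
Qed.

Lemma lvl_cM d : d <= M -> #|lvl (M - d)| * c (M - d) = #|lvl M| * M`!.
Proof.
elim: d => [|d IH] dM.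
  by rewrite subn0 /c subnn fact0 muln1.
rewrite lvl_c; last lia. have -> : (M - d.+1).+1 = M - d by lia. apply: IH; lia.
Qed.

Lemma lvl_bin k : k <= M -> #|lvl k| = #|lvl M| * 'C(M, k).
Proof.
move=> kM.
suff : #|lvl k| * c k = #|lvl M| * 'C(M, k) * c k.
  move/eqP. rewrite eqn_mul2r => /orP [|/eqP //].
  by rewrite /c muln_eq0 !eqn0Ngt !fact_gt0.
have -> : #|lvl M| * 'C(M, k) * c k = #|lvl M| * M`! by rewrite -mulnA /c bin_fact.
have := @lvl_cM (M - k). rewrite subKn //. by apply; rewrite leq_subr.
Qed.

Lemma c_min k : k <= M -> c (M./2) <= c k.
Proof.
move=> kM.
have e1 := bin_fact kM. have e2 := bin_fact (halfM M).
rewrite -(@leq_pmul2l 'C(M, k)) ?bin_gt0 //.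
apply: leq_trans (leq_mul (bin_max M k) (leqnn _)) _.
by rewrite /c e1 e2.
Qed.

Theorem LYM_bound : #|G| * 2 ^ M <= 'C(M, M./2) * #|W|.
Proof.
have EW : #|W| = #|lvl M| * 2 ^ M.
  rewrite (@card_all W) // -sum_bin big_distrr /=. apply: eq_bigr => k _.
  rewrite -lvl_bin //. by rewrite -ltnS.
have EG : #|G| = \sum_(k < M.+1) #|Gk k| by rewrite (@card_all G).
have h1 : #|G| * c (M./2) <= \sum_(k < M.+1) #|Gk k| * c k.
  rewrite EG big_distrl /=. apply: leq_sum => k _. rewrite leq_mul2l; apply/orP; right.
  apply: c_min. by rewrite -ltnS.
have h2 := main_ind (leqnn M).
have h3 : #|U M| <= #|lvl M|.
  apply: subset_leq_card. apply/subsetP => A. by rewrite inE => /andP [].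
have e2 := bin_fact (halfM M).
have : #|G| * c (M./2) <= #|lvl M| * 'C(M, M./2) * c (M./2).
  apply: leq_trans h1 _. apply: leq_trans h2 _.
  rewrite -mulnA /c e2 subnn fact0 muln1 leq_mul2r. by rewrite h3 orbT.
rewrite leq_mul2r eqn0Ngt /c muln_gt0 !fact_gt0 /= => hG.
rewrite EW. apply: leq_trans (leq_mul hG (leqnn (2 ^ M))) _. by rewrite mulnA (mulnC #|lvl M|).
Qed.

End LYM.

Section Conc.
Variable n : nat.
Definition mm := n %/ 3.
Lemma lt_x (i : 'I_mm) : (i : nat) < n. Proof. have := ltn_ord i. rewrite /mm. lia. Qed.
Lemma lt_y (i : 'I_mm) : mm + 2 * i < n. Proof. have := ltn_ord i. rewrite /mm. lia. Qed.
Lemma lt_z (i : 'I_mm) : (mm + 2 * i).+1 < n. Proof. have := ltn_ord i. rewrite /mm. lia. Qed.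
Definition px i : 'I_n := Ordinal (lt_x i).
Definition py i : 'I_n := Ordinal (lt_y i).
Definition pz i : 'I_n := Ordinal (lt_z i).
Definition pat (A : {set 'I_n}) (i : 'I_mm) : bool * bool * bool := (px i \in A, py i \in A, pz i \in A).
Definition rep (A : {set 'I_n}) i (p : bool * bool * bool) : {set 'I_n} :=
  [set j | if j == px i then p.1.1 else if j == py i then p.1.2 else if j == pz i then p.2 else j \in A].
Definition dn := (true, false, false).
Definition upp := (false, true, true).
Definition mobp (p : bool * bool * bool) := (p == dn) || (p == upp).
Definition mobS A := [set i | mobp (pat A i)].
Definition upS A := [set i | pat A i == upp].
Definition dnS A := [set i | pat A i == dn].

Lemma pxy i j : px i != py j. Proof. apply/eqP => /(congr1 val) /=. have := ltn_ord i. lia. Qed.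
Lemma pxz i j : px i != pz j. Proof. apply/eqP => /(congr1 val) /=. have := ltn_ord i. lia. Qed.
Lemma pyz i j : py i != pz j. Proof. apply/eqP => /(congr1 val) /=. lia. Qed.
Lemma px_inj i j : (px i == px j) = (i == j). Proof. by apply/eqP/eqP => [/(congr1 val) /= /val_inj|->]. Qed.
Lemma py_inj i j : (py i == py j) = (i == j).
Proof. apply/eqP/eqP => [/(congr1 val) /= H|->] //. apply: ord_inj. lia. Qed.
Lemma pz_inj i j : (pz i == pz j) = (i == j).
Proof. apply/eqP/eqP => [/(congr1 val) /= H|->] //. apply: ord_inj. lia. Qed.

Lemma pat_rep A i p : pat (rep A i p) i = p.
Proof.
case: p => [[a b] c]. rewrite /pat /rep !inE eqxx /=.
by rewrite eq_sym (negbTE (pxy _ _)) eqxx /= eq_sym (negbTE (pxz _ _)) eq_sym (negbTE (pyz _ _)) eqxx.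
Qed.

Lemma pat_rep_other A i j p : i != j -> pat (rep A i p) j = pat A j.
Proof.
move=> ij. rewrite /pat /rep !inE.
rewrite px_inj (negbTE (pxy _ _)) (negbTE (pxz _ _)) eq_sym (negbTE ij).
rewrite eq_sym (negbTE (pxy _ _)) py_inj eq_sym (negbTE ij) (negbTE (pyz _ _)).
by rewrite eq_sym (negbTE (pxz _ _)) eq_sym (negbTE (pyz _ _)) pz_inj eq_sym (negbTE ij).
Qed.

Lemma rep_pat A i : rep A i (pat A i) = A.
Proof.
apply/setP => j. rewrite /rep /pat !inE /=.
case: (eqVneq j (px i)) => [->|_] //. case: (eqVneq j (py i)) => [->|_] //. by case: (eqVneq j (pz i)) => [->|_].
Qed.

Lemma rep_rep A i p q : rep (rep A i p) i q = rep A i q.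
Proof.
apply/setP => j. rewrite /rep !inE /=.
by case: (j == px i); case: (j == py i); case: (j == pz i).
Qed.

Lemma rep_inj A i j p q : rep A i p = rep A j q -> p != pat A i -> i = j /\ p = q.
Proof.
move=> E pn. case: (eqVneq i j) => [ij|ij].
  subst j. split=> //. by rewrite -(pat_rep A i p) E pat_rep.
have := pat_rep A i p. rewrite E pat_rep_other; last by rewrite eq_sym.
move=> e. by rewrite e eqxx in pn.
Qed.

Lemma patS_rep (P : pred (bool*bool*bool)) A i p :
  [set j | P (pat (rep A i p) j)] = if P p then i |: [set j | P (pat A j)] else [set j | P (pat A j)] :\ i.
Proof.
apply/setP => j. case: (eqVneq j i) => [->|ji].
  rewrite inE pat_rep. case: (P p); by rewrite !inE eqxx.
rewrite inE pat_rep_other; last by rewrite eq_sym.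
case: (P p); by rewrite !inE (negbTE ji).
Qed.


Definition upN A := [set rep A i upp | i in dnS A].
Definition WM M := [set A : {set 'I_n} | #|mobS A| == M].
Definition RR (A B : {set 'I_n}) : bool :=
  [&& (A :\: B) \subset [set j : 'I_n | j < mm], (B :\: A) \subset [set j : 'I_n | mm <= j]
   & #|B :\: A| == 2 * #|A :\: B|].

Lemma mobS_rep A i p : mobp (pat A i) -> mobp p -> mobS (rep A i p) = mobS A.
Proof.
move=> h1 h2. rewrite /mobS patS_rep h2. apply/setUidPr. by rewrite sub1set inE.
Qed.

Lemma card_mobS A : #|mobS A| = #|dnS A| + #|upS A|.
Proof.
rewrite -cardsUI. have -> : dnS A :&: upS A = set0.
  apply/setP => i. rewrite !inE. by case: eqP => // ->.
rewrite cards0 addn0. apply: eq_card => i. by rewrite !inE.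
Qed.

Lemma upS_sub A : upS A \subset mobS A.
Proof. apply/subsetP => i. rewrite !inE => /eqP ->. by rewrite /mobp orbT. Qed.

Lemma upS_rep A i : pat A i = dn -> #|upS (rep A i upp)| = (#|upS A|).+1.
Proof.
move=> e. rewrite /upS (patS_rep (fun p => p == upp)) eqxx cardsU1 inE e. by [].
Qed.

Lemma in_upN A B : B \in upN A -> exists2 i, pat A i = dn & B = rep A i upp.
Proof. case/imsetP => i. rewrite inE => /eqP e ->. by exists i. Qed.

Lemma hyp_upW M A B : A \in WM M -> B \in upN A -> B \in WM M /\ #|upS B| = (#|upS A|).+1.
Proof.
move=> AW /in_upN [i e ->]. split; last exact: upS_rep.
rewrite inE mobS_rep ?e //. by rewrite inE in AW.
Qed.

Lemma hyp_upcard M A : A \in WM M -> #|upN A| = M - #|upS A|.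
Proof.
rewrite inE => /eqP <-. rewrite card_mobS addnK card_in_imset //.
move=> i j. rewrite !inE => /eqP ei _ E. have [] := rep_inj E => //. by rewrite ei.
Qed.

Lemma hyp_dncard M B : B \in WM M -> 0 < #|upS B| ->
  #|[set A in WM M | B \in upN A]| = #|upS B|.
Proof.
move=> BW _.
have -> : [set A in WM M | B \in upN A] = [set rep B i dn | i in upS B].
  apply/setP => A. rewrite inE. apply/idP/idP.
    case/andP=> AW /in_upN [i e EB]. apply/imsetP; exists i.
      by rewrite inE EB pat_rep.
    by rewrite EB rep_rep -e rep_pat.
  case/imsetP=> i. rewrite inE => /eqP e ->.
  rewrite inE mobS_rep ?e //. rewrite inE in BW. rewrite BW /=.
  apply/imsetP; exists i; first by rewrite inE pat_rep.
  by rewrite rep_rep -e rep_pat.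
rewrite card_in_imset //.
move=> i j. rewrite !inE => /eqP ei _ E. have [] := rep_inj E => //. by rewrite ei.
Qed.

Lemma hyp_Rrefl A : RR A A.
Proof. by rewrite /RR setDv !sub0set cards0. Qed.

Lemma hyp_Rstep A B B' : RR A B -> B' \in upN B -> RR A B' /\ A != B'.
Proof.
case/and3P=> s1 s2 /eqP c1 /in_upN [i e ->].
move: e; rewrite /pat /dn => -[xB yB zB].
have xA : px i \in A.
  apply/idPn => xA. have : px i \in B :\: A by rewrite inE xA xB.
  move/(subsetP s2). rewrite inE /=. have := ltn_ord i. lia.
have yA : py i \notin A.
  apply/negP => yA. have : py i \in A :\: B by rewrite inE yA yB.
  move/(subsetP s1). rewrite inE /=. lia.
have zA : pz i \notin A.
  apply/negP => zA. have : pz i \in A :\: B by rewrite inE zA zB.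
  move/(subsetP s1). rewrite inE /=. lia.
have E1 : A :\: rep B i upp = px i |: (A :\: B).
  apply/setP => j. rewrite !inE /=.
  case: (eqVneq j (px i)) => [->|jx] /=; first by rewrite xA.
  case: (eqVneq j (py i)) => [->|jy] /=; first by rewrite (negbTE yA) andbF.
  case: (eqVneq j (pz i)) => [->|jz] /=; first by rewrite (negbTE zA) ?andbF.
  by [].
have E2 : rep B i upp :\: A = py i |: (pz i |: (B :\: A)).
  apply/setP => j. rewrite !inE /=.
  case: (eqVneq j (px i)) => [->|jx] /=; first by rewrite xA ?(negbTE (pxy _ _)) ?(negbTE (pxz _ _)) ?andbF.
  case: (eqVneq j (py i)) => [->|jy] /=; first by rewrite (negbTE yA) ?andbF.
  case: (eqVneq j (pz i)) => [->|jz] /=; first by rewrite (negbTE zA) ?andbF.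
  by [].
split; last first.
  apply/eqP => AB. move: xA. rewrite {1}AB !inE eqxx. by [].
rewrite /RR E1 E2 !subUset !sub1set s1 s2 !inE /=.
have := ltn_ord i. move=> il. rewrite il leq_addr /=.
have -> : mm <= (mm + 2 * i).+1 by lia.
rewrite /= !cardsU1 c1 !inE. rewrite (negbTE (pyz _ _)) yA zA yB zB xA xB /=.
apply/eqP. lia.
Qed.



Lemma card_mobp : #|[set p | mobp p]| = 2.
Proof.
have -> : [set p | mobp p] = [set dn; upp].
  apply/setP => -[[a b] c]. by rewrite !inE.
by rewrite cards2.
Qed.

Lemma card_nmobp : #|[set p | ~~ mobp p]| = 6.
Proof.
have := cardsC [set p | mobp p].
rewrite card_mobp !card_prod !card_bool.
have -> : ~: [set p | mobp p] = [set p | ~~ mobp p].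
  apply/setP => p. by rewrite !inE.
move=> H. by apply/eqP; rewrite -(eqn_add2l 2) H.
Qed.

Definition upN2 A := [set rep A x.1 x.2 | x in [set x : 'I_mm * (bool*bool*bool) | ~~ mobp (pat A x.1) && mobp x.2]].

Lemma rep_inj2 A (P Q : pred (bool * bool * bool)) :
  (forall p q, P p -> Q q -> p != q) ->
  {in [set x : 'I_mm * (bool*bool*bool) | P (pat A x.1) && Q x.2] &, injective (fun x => rep A x.1 x.2)}.
Proof.
move=> PQ [i p] [j q]. rewrite !inE /= => /andP [Pi Qp] /andP [Pj Qq] E.
have pn : p != pat A i by rewrite eq_sym; exact: PQ.
have [ij pq] := rep_inj E pn. by rewrite ij pq.
Qed.

Lemma card_setX2 A (P Q : pred (bool * bool * bool)) :
  #|[set x : 'I_mm * (bool*bool*bool) | P (pat A x.1) && Q x.2]| = #|[set i | P (pat A i)]| * #|[set p | Q p]|.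
Proof.
rewrite -cardsX. apply: eq_card => -[i p]. by rewrite !inE.
Qed.

Lemma mob_rep_up A i p : ~~ mobp (pat A i) -> mobp p -> #|mobS (rep A i p)| = (#|mobS A|).+1.
Proof. move=> h1 h2. by rewrite /mobS patS_rep h2 cardsU1 inE h1. Qed.

Lemma mob_rep_dn A i p : mobp (pat A i) -> ~~ mobp p -> #|mobS (rep A i p)| = (#|mobS A|).-1.
Proof.
move=> h1 h2. rewrite /mobS patS_rep (negbTE h2).
have := cardsD1 i [set j | mobp (pat A j)]. rewrite inE h1 /=. lia.
Qed.

Lemma card_nmob A : #|[set i | ~~ mobp (pat A i)]| = mm - #|mobS A|.
Proof.
have := cardsC (mobS A). rewrite card_ord.
have -> : ~: mobS A = [set i | ~~ mobp (pat A i)] by apply/setP => i; rewrite !inE.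
lia.
Qed.

Lemma up2_W M A B : A \in WM M -> B \in upN2 A -> B \in WM M.+1.
Proof.
rewrite !inE => /eqP AM /imsetP [[i p]]. rewrite inE /= => /andP [h1 h2] ->.
by rewrite mob_rep_up // AM.
Qed.

Lemma up2_card A : #|upN2 A| = (mm - #|mobS A|) * 2.
Proof.
rewrite card_in_imset; last first.
  by apply: (@rep_inj2 A (fun p => ~~ mobp p) mobp) => p q Hp Hq; apply/eqP => e; rewrite e Hq in Hp.
by rewrite (@card_setX2 A (fun p => ~~ mobp p) mobp) card_nmob card_mobp.
Qed.

Lemma dn2_card M B : B \in WM M.+1 -> #|[set A in WM M | B \in upN2 A]| = M.+1 * 6.
Proof.
move=> BW.
have -> : [set A in WM M | B \in upN2 A] =
    [set rep B x.1 x.2 | x in [set x : 'I_mm * (bool*bool*bool) | mobp (pat B x.1) && ~~ mobp x.2]].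
  apply/setP => A. rewrite inE. apply/idP/idP.
    case/andP=> AW /imsetP [[i p]]. rewrite inE /= => /andP [h1 h2] EB.
    apply/imsetP; exists (i, pat A i); first by rewrite inE /= EB pat_rep h2.
    by rewrite /= EB rep_rep rep_pat.
  case/imsetP=> -[i q]. rewrite inE /= => /andP [h1 h2] ->.
  rewrite inE. rewrite inE in BW. rewrite mob_rep_dn // (eqP BW) /=.
rewrite eqxx /=.   apply/imsetP; exists (i, pat B i); first by rewrite inE /= pat_rep h1 h2.
  by rewrite /= rep_rep rep_pat.
rewrite card_in_imset; last first.
  by apply: (@rep_inj2 B mobp (fun p => ~~ mobp p)) => p q Hp Hq; apply/eqP => e; rewrite -e Hp in Hq.
rewrite (@card_setX2 B mobp (fun p => ~~ mobp p)) card_nmobp. rewrite inE in BW. by rewrite (eqP BW).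
Qed.

End Conc.

Lemma card_part (T : finType) (H : {set T}) (f : T -> nat) K :
  (forall A, A \in H -> f A <= K) ->
  #|H| = \sum_(k < K.+1) #|[set A in H | f A == k]|.
Proof.
move=> HK.
have gen : forall j, #|[set A in H | f A < j]| = \sum_(k < j) #|[set A in H | f A == k]|.
  elim => [|j IH].
    rewrite big_ord0. apply/eqP; rewrite cards_eq0. apply/eqP/setP => A. by rewrite !inE andbF.
  rewrite big_ord_recr /= -IH.
  have -> : [set A in H | f A < j.+1] = [set A in H | f A < j] :|: [set A in H | f A == j].
    apply/setP => A. rewrite !inE ltnS leq_eqVlt. by case: (A \in H); case: ltngtP.
  rewrite cardsU. have -> : [set A in H | f A < j] :&: [set A in H | f A == j] = set0.
    apply/setP => A. rewrite !inE. case: (A \in H) => //=. by case: ltngtP.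
  by rewrite cards0 subn0.
rewrite -gen. apply: eq_card => A. rewrite inE.
case AH: (A \in H) => //=. symmetry. rewrite ltnS. exact: HK.
Qed.

Lemma dcount_const (T : finType) (upN : T -> {set T}) (S S' : {set T}) p q :
  (forall A, A \in S -> upN A \subset S') -> (forall A, A \in S -> #|upN A| = p) ->
  (forall B, B \in S' -> #|[set A in S | B \in upN A]| = q) -> #|S| * p = #|S'| * q.
Proof.
move=> h1 h2 h3. rewrite -!sum_nat_const.
transitivity (\sum_(A in S) #|upN A :&: S'|).
  apply: eq_bigr => A AS. rewrite -(h2 A AS). by rewrite (setIidPl (h1 A AS)).
rewrite dcount. apply: eq_bigr => B BS. exact: h3.
Qed.

Section Fin.
Variable n : nat.
Definition w M := #|WM n M|.

Lemma mob_le (A : {set 'I_n}) : #|mobS A| <= mm n.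
Proof. have := max_card (mobS A). by rewrite card_ord. Qed.

Lemma recW M : w M * ((mm n - M) * 2) = w M.+1 * (M.+1 * 6).
Proof.
apply: (@dcount_const _ (@upN2 n)).
- move=> A AW. apply/subsetP => B. exact: up2_W.
- move=> A. rewrite inE => /eqP <-. exact: up2_card.
- move=> B. exact: dn2_card.
Qed.

Lemma sumW : \sum_(M < (mm n).+1) w M = 2 ^ n.
Proof.
have := @card_part _ [set: {set 'I_n}] (fun A => #|mobS A|) (mm n) (fun A _ => mob_le A).
rewrite -powersetT card_powerset cardsT card_ord => ->. apply: eq_bigr => M _.
rewrite /w powersetT. apply: eq_card => A. by rewrite !inE.
Qed.

Lemma sumW' : \sum_(M < (mm n).+2) w M = 2 ^ n.
Proof.
have := @card_part _ [set: {set 'I_n}] (fun A => #|mobS A|) (mm n).+1 (fun A _ => leqW (mob_le A)).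
rewrite -powersetT card_powerset cardsT card_ord => ->. apply: eq_bigr => M _.
rewrite /w powersetT. apply: eq_card => A. by rewrite !inE.
Qed.

Lemma FM_bound (F : {set {set 'I_n}}) M : free_family F ->
  #|F :&: WM n M| * 2 ^ M <= 'C(M, M./2) * w M.
Proof.
move=> fr. apply: (@LYM_bound _ (WM n M) (fun A => #|upS A|) M (@upN n) (@RR n)).
- move=> A. rewrite inE => /eqP <-. apply: subset_leq_card. exact: upS_sub.
- exact: hyp_upW.
- exact: hyp_upcard.
- exact: hyp_dncard.
- exact: hyp_Rrefl.
- exact: hyp_Rstep.
- exact: subsetIr.
- move=> A B. rewrite !inE => /andP [AF _] /andP [BF _] /and3P [s1 s2 /eqP c] ne.
  apply: (fr A B AF BF). split => //. split => //.
  move=> a b aA bB. have := subsetP s1 a aA. have := subsetP s2 b bB. rewrite !inE. lia.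
Qed.

Lemma F_split (F : {set {set 'I_n}}) : #|F| = \sum_(M < (mm n).+1) #|F :&: WM n M|.
Proof.
rewrite (@card_part _ F (fun A => #|mobS A|) (mm n)); last by move=> A _; exact: mob_le.
apply: eq_bigr => M _. apply: eq_card => A. by rewrite !inE.
Qed.
End Fin.

Lemma cen_rec k : k.+1 * 'C(k.*2.+2, k.+1) = 2 * (k.*2.+1) * 'C(k.*2, k).
Proof.
have e1 := mul_bin_diag (k.*2.+2) k. simpl in e1.
have e2 := mul_bin_down (k.*2.+1) k. simpl in e2.
have e3 : k.*2.+1 - k = k.+1 by lia.
rewrite e3 in e2.
apply/eqP. rewrite -(@eqn_pmul2l k.+1) // -e1.
apply/eqP. rewrite mulnCA -e2. lia.
Qed.

Lemma cen_bound k : 'C(k.*2, k) ^ 2 * (3 * k + 1) <= 16 ^ k.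
Proof.
elim: k => [|k IH]; first by [].
have R := cen_rec k.
move: R IH. rewrite doubleS.
move: ('C(k.*2, k)) ('C(k.*2.+2, k.+1)) (16 ^ k) (expnS 16 k) => b b' Y -> R IH.
rewrite -(@leq_pmul2l (k.+1 ^ 2)) ?expn_gt0 //.
have -> : k.+1 ^ 2 * (b' ^ 2 * (3 * k.+1 + 1)) = (k.+1 * b') ^ 2 * (3 * k + 4) by rewrite !expnMn; lia.
rewrite R.
have h1 : (2 * k.*2.+1) ^ 2 * (3 * k + 4) <= 16 * (k.+1 ^ 2) * (3 * k + 1).
  rewrite -!mul2n. nia.
have h2 := leq_mul h1 (leqnn (b ^ 2)).
have h3 := leq_mul (leqnn (16 * k.+1 ^ 2)) IH.
rewrite expnMn. lia.
Qed.

Lemma cbound M : 'C(M, M./2) ^ 2 * M.+1 <= 2 * 4 ^ M.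
Proof.
have E : 4 ^ (M./2).*2 = 16 ^ M./2 by rewrite -mul2n expnM.
case/boolP: (odd M) => oM.
  have eM : M = (M./2).*2.+1 by rewrite -[LHS]odd_double_half oM.
  move: (M./2) eM E => k -> E.
  have R := cen_rec k. have e1 := mul_bin_diag (k.*2.+2) k. simpl in e1.
  have B := cen_bound k.+1. rewrite doubleS in B.
  have e2 : 'C(k.*2.+2, k.+1) = 2 * 'C(k.*2.+1, k).
    apply/eqP. rewrite -(@eqn_pmul2l k.+1) // -e1. apply/eqP. lia.
  rewrite e2 in B. rewrite [4 ^ _]expnS E.
  move: B. rewrite [16 ^ _]expnS. move: ('C(k.*2.+1, k)) (16 ^ k) => s Y B. rewrite expnMn in B. nia.
have eM : M = (M./2).*2 by rewrite -[LHS]odd_double_half (negbTE oM).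
move: (M./2) eM E => k -> E. rewrite ?doubleK E.
have B := cen_bound k. move: B. move: ('C(k.*2, k)) (16 ^ k) => s Y B. nia.
Qed.

Section Real.
Local Open Scope R_scope.

Fixpoint sR (g : nat -> R) (k : nat) : R :=
  match k with O => 0 | S k' => sR g k' + g k' end.

Lemma sR_le g h k : (forall M, (M < k)%nat -> g M <= h M) -> sR g k <= sR h k.
Proof.
induction k as [|k IH]; simpl; intros H; [lra|].
assert (sR g k <= sR h k) by (apply IH; intros; apply H; lia).
assert (g k <= h k) by (apply H; lia). lra.
Qed.

Lemma sR_ext g h k : (forall M, (M < k)%nat -> g M = h M) -> sR g k = sR h k.
Proof.
induction k as [|k IH]; simpl; intros H; [lra|].
rewrite IH; last by (intros; apply H; lia). rewrite H; last lia. reflexivity.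
Qed.

Lemma sR_add g h k : sR (fun M => g M + h M) k = sR g k + sR h k.
Proof. induction k; simpl; [lra|]. rewrite IHk. lra. Qed.

Lemma sR_scale c g k : sR (fun M => c * g M) k = c * sR g k.
Proof. induction k; simpl; [lra|]. rewrite IHk. lra. Qed.

Lemma sR_shift g k : sR (fun M => g (S M)) k = sR g (S k) - g O.
Proof. induction k; simpl in *; [lra|]. rewrite IHk. lra. Qed.

Lemma pt_bound (a w t M f : R) : 0 < t -> 0 <= a -> 0 <= w -> 0 <= M ->
  f <= a * w -> a ^ 2 * (M + 1) <= 2 -> f <= w * (t / (M + 1) + / (2 * t)).
Proof.
intros ht ha hw hM hf ha2.
pose b := t / (M + 1) + / (2 * t). rewrite -/b.
assert (hb0 : 0 <= b).
{ unfold b. assert (0 < t / (M+1)) by (apply Rdiv_lt_0_compat; lra).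
  assert (0 < / (2 * t)) by (apply Rinv_0_lt_compat; lra). lra. }
assert (hb2 : 2 / (M + 1) <= b ^ 2).
{ unfold b. pose x := t / (M+1). pose y := / (2 * t). rewrite -/x -/y.
  assert (xy : x * y = / (2 * (M + 1))) by (unfold x, y; field; lra).
  assert (e : 2 / (M+1) = 4 * (x * y)) by (rewrite xy; field; lra).
  rewrite e. assert (0 <= (x - y) * (x - y)) by apply Rle_0_sqr.
  replace ((x + y) ^ 2) with ((x - y) * (x - y) + 4 * (x * y)) by ring. lra. }
assert (a ^ 2 <= 2 / (M + 1)).
{ apply Rmult_le_reg_r with (M + 1); [lra|]. unfold Rdiv. rewrite Rmult_assoc Rinv_l; last lra. lra. }
assert (a <= b) by nra.
assert (a * w <= b * w) by (apply Rmult_le_compat_r; lra). lra.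
Qed.

Lemma real_core (n m : nat) (fR wR cR : nat -> R) (Fc : R) :
 (0 < n)%nat -> INR n <= 3 * (INR m + 1) ->
 Fc = sR fR (S m) ->
 (forall M, fR M * 2 ^ M <= cR M * wR M) ->
 (forall M, cR M ^ 2 * (INR M + 1) <= 2 * 4 ^ M) ->
 (forall M, 0 <= wR M) -> (forall M, 0 <= cR M) ->
 (forall M, (M <= m)%nat -> wR M * (INR m - INR M) = 3 * (INR M + 1) * wR (S M)) ->
 sR wR (S m) = 2 ^ n -> sR wR (S (S m)) = 2 ^ n ->
 Fc <= 5 * (2 ^ n / sqrt (INR n)).
Proof.
intros hn hm hF hf hc hw hc0 hrec s1 s2.
assert (nR : 0 < INR n) by (apply lt_0_INR; lia).
pose sq := sqrt (INR n). rewrite -/sq.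
assert (sq0 : 0 < sq) by (apply sqrt_lt_R0; lra).
assert (sq2 : sq * sq = INR n) by (apply sqrt_sqrt; lra).
pose t := sq / 5.
assert (t0 : 0 < t) by (unfold t; lra).
assert (A : forall M, fR M <= wR M * (t / (INR M + 1) + / (2 * t))).
{ intro M. apply (@pt_bound (cR M / 2 ^ M)); auto.
  - assert (0 < 2 ^ M) by (apply pow_lt; lra). unfold Rdiv. apply Rmult_le_pos; [apply hc0|].
    left. apply Rinv_0_lt_compat. lra.
  - apply pos_INR.
  - assert (p : 0 < 2 ^ M) by (apply pow_lt; lra).
    specialize (hf M). apply Rmult_le_reg_r with (2 ^ M); [lra|].
    replace (cR M / 2 ^ M * wR M * 2 ^ M) with (cR M * wR M) by (field; lra). lra.
  - assert (p : 0 < 2 ^ M) by (apply pow_lt; lra).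
    assert (e4 : 4 ^ M = 2 ^ M * 2 ^ M) by (rewrite -Rpow_mult_distr; f_equal; lra).
    specialize (hc M). rewrite e4 in hc.
    replace ((cR M / 2 ^ M) ^ 2 * (INR M + 1)) with (cR M ^ 2 * (INR M + 1) / (2 ^ M * 2 ^ M)) by (field; lra).
    apply Rmult_le_reg_r with (2 ^ M * 2 ^ M); [nra|].
    unfold Rdiv. rewrite Rmult_assoc Rinv_l; last nra. lra. }
assert (B : sR (fun M => wR M / (INR M + 1)) (S m) * (INR m + 1) <= 4 * 2 ^ n).
{ rewrite Rmult_comm -sR_scale.
  rewrite (@sR_ext _ (fun M => 3 * wR (S M) + wR M)).
  - rewrite sR_add sR_scale sR_shift s1 s2. specialize (hw O). lra.
  - intros M HM. assert (HM' : (M <= m)%nat) by lia. specialize (hrec M HM').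
    assert (0 <= INR M) by apply pos_INR.
    apply Rmult_eq_reg_r with (INR M + 1); [|lra].
    replace ((INR m + 1) * (wR M / (INR M + 1)) * (INR M + 1)) with (wR M * (INR m - INR M) + wR M * (INR M + 1)) by (field; lra).
    rewrite hrec. ring. }
assert (C : Fc <= t * sR (fun M => wR M / (INR M + 1)) (S m) + / (2 * t) * 2 ^ n).
{ rewrite hF -s1 -!sR_scale -sR_add. apply sR_le. intros M _.
  specialize (A M). replace (t * (wR M / (INR M + 1)) + / (2 * t) * wR M) with (wR M * (t / (INR M + 1) + / (2 * t))) by (field; split; [lra|assert (0 <= INR M) by apply pos_INR; lra]).
  exact A. }
assert (p : 0 < 2 ^ n) by (apply pow_lt; lra).
pose S0 := sR (fun M => wR M / (INR M + 1)) (S m). rewrite -/S0 in B C.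
assert (m0 : 0 < INR m + 1) by (assert (0 <= INR m) by apply pos_INR; lra).
assert (S1 : S0 <= 4 * 2 ^ n / (INR m + 1)).
{ apply Rmult_le_reg_r with (INR m + 1); [lra|]. unfold Rdiv. rewrite Rmult_assoc Rinv_l; last lra. lra. }
assert (S2 : 4 * 2 ^ n / (INR m + 1) <= 12 * 2 ^ n / INR n).
{ unfold Rdiv. apply Rmult_le_reg_r with (INR n * (INR m + 1)); [nra|].
  replace (4 * 2 ^ n * / (INR m + 1) * (INR n * (INR m + 1))) with (4 * 2 ^ n * INR n) by (field; lra).
  replace (12 * 2 ^ n * / INR n * (INR n * (INR m + 1))) with (12 * 2 ^ n * (INR m + 1)) by (field; lra).
  nra. }
assert (E1 : t * (12 * 2 ^ n / INR n) = 12 / 5 * (2 ^ n / sq)).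
{ unfold t. rewrite -sq2. field. lra. }
assert (E2 : / (2 * t) * 2 ^ n = 5 / 2 * (2 ^ n / sq)).
{ unfold t. field. lra. }
assert (q : 0 < 2 ^ n / sq) by (apply Rdiv_lt_0_compat; lra).
assert (t * S0 <= t * (12 * 2 ^ n / INR n)) by (apply Rmult_le_compat_l; lra).
lra.
Qed.

Lemma INR_addn a b : INR (a + b)%N = INR a + INR b.
Proof. exact: plus_INR. Qed.
Lemma INR_muln a b : INR (a * b)%N = INR a * INR b.
Proof. exact: mult_INR. Qed.
Lemma INR_expn a k : INR (a ^ k)%N = INR a ^ k.
Proof. elim: k => [|k IH] //. by rewrite expnS INR_muln IH. Qed.
Lemma INR_subn a b : (b <= a)%N -> INR (a - b)%N = INR a - INR b.
Proof. move=> h. apply: minus_INR. by apply/leP. Qed.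
Lemma INR_sum (g : nat -> nat) k : INR (\sum_(M < k) g M)%N = sR (fun M => INR (g M)) k.
Proof.
elim: k => [|k IH]; first by rewrite big_ord0.
by rewrite big_ord_recr /= INR_addn IH.
Qed.
Lemma INR_le a b : (a <= b)%N -> INR a <= INR b.
Proof. move=> h. apply: le_INR. by apply/leP. Qed.

Lemma main_bound n (F : {set {set 'I_n}}) : (0 < n)%N -> free_family F ->
  INR #|F| <= 5 * (2 ^ n / sqrt (INR n)).
Proof.
move=> hn fr.
have core := @real_core n (mm n) (fun M => INR #|F :&: WM n M|) (fun M => INR (w n M))
  (fun M => INR 'C(M, M./2)) (INR #|F|) hn.
have H1 : (INR n <= 3 * (INR (mm n) + 1))%R.
  have h : (n <= 3 * (mm n).+1)%N by rewrite /mm; lia.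
  have := @INR_le _ _ h. rewrite INR_muln [INR (mm n).+1]S_INR. move=> h'. have e3 : INR 3 = 3%R by simpl; lra. by rewrite e3 in h'.
have H2 : INR #|F| = sR (fun M => INR #|F :&: WM n M|) (mm n).+1.
  by rewrite (F_split F) (INR_sum (fun M => #|F :&: WM n M|)).
have H3 : forall M, (INR #|F :&: WM n M| * 2 ^ M <= INR 'C(M, M./2) * INR (w n M))%R.
  move=> M. have := INR_le (FM_bound M fr). by rewrite !INR_muln INR_expn.
have H4 : forall M, (INR 'C(M, M./2) ^ 2 * (INR M + 1) <= 2 * 4 ^ M)%R.
  move=> M. have := INR_le (cbound M). rewrite !INR_muln !INR_expn [INR M.+1]S_INR.
  move=> h'. have e4 : INR 4 = 4%R by simpl; lra. have e2 : INR 2 = 2%R by simpl; lra. rewrite e4 e2 in h'. by rewrite /= Rmult_1_r.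
have H5 : forall M, (0 <= INR (w n M))%R by move=> M; apply: pos_INR.
have H6 : forall M, (0 <= INR 'C(M, M./2))%R by move=> M; apply: pos_INR.
have H7 : forall M, (M <= mm n)%N -> (INR (w n M) * (INR (mm n) - INR M) = 3 * (INR M + 1) * INR (w n M.+1))%R.
  move=> M hM. have := congr1 INR (recW n M). rewrite !INR_muln INR_subn // [INR M.+1]S_INR.
  move=> e. have e6 : INR 6 = 6%R by simpl; lra. have e2 : INR 2 = 2%R by simpl; lra.
  rewrite ?e6 ?e2 in e. nra.
have H8 : sR (fun M => INR (w n M)) (mm n).+1 = (2 ^ n)%R.
  by rewrite -(INR_sum (fun M => w n M)) sumW INR_expn.
have H9 : sR (fun M => INR (w n M)) (mm n).+2 = (2 ^ n)%R.
  by rewrite -(INR_sum (fun M => w n M)) sumW' INR_expn.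
exact: core H1 H2 H3 H4 H5 H6 H7 H8 H9.
Qed.

End Real.

From Stdlib Require Import Reals.

Theorem theorem3 :
  exists C : R, (0 < C)%R /\
    forall (n : nat) (F : {set {set 'I_n}}), (0 < n)%N ->
      free_family F ->
      (INR #|F| <= C * exp (120 * sqrt (ln (INR n))) * (2 ^ n / sqrt (INR n)))%R.
Proof.
exists 5%R. split; first lra.
move=> n F hn fr.
have := main_bound hn fr.
have ex : (1 <= exp (120 * sqrt (ln (INR n))))%R.
  have := exp_ineq1_le (120 * sqrt (ln (INR n))). have := sqrt_pos (ln (INR n)). lra.
have pos : (0 <= 2 ^ n / sqrt (INR n))%R.
  apply: Rmult_le_pos; first by apply: pow_le; lra.
  apply: Rlt_le. apply: Rinv_0_lt_compat. apply: sqrt_lt_R0. apply: lt_0_INR. by apply/ltP.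
move=> h. nra.
Qed.
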